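(* Let $1\le p<2$, $f\in\mathcal H_0$, $u$ the solution of $\partial_tu+\partial J(u)\ni0$, $u(0)=f$, with extinction time $T_{\mathrm{ex}}$, and $w(t):=u(t)/a(t)$ with $a(t)=(1-t/T_{\mathrm{ex}})^{1/(2-p)}$, $0\le t<T_{\mathrm{ex}}$. Assume $T_{\mathrm{ex}}=\frac{\|f\|^{2-p}}{(2-p)\lambda_1}$ and that an asymptotic profile exists, i.e. there are $w_*\in\mathcal H$ and $t_k\nearrow T_{\mathrm{ex}}$ with $w(t_k)\to w_*$ strongly. Then $\Lambda(t)=\lambda_1$ for all $0\le t<T_{\mathrm{ex}}$, and hence $f$ is a ground state.
   Context: $\mathcal H$ is a real Hilbert space with inner product $\langle\cdot,\cdot\rangle$ and norm $\|\cdot\|$. $J:\mathcal H\to\mathbb R\cup\{\infty\}$ is convex, lower semicontinuous, proper, with dense effective domain, and absolutely $p$-homogeneous: $J(cu)=|c|^pJ(u)$ for $c\ne0$, $J(0)=0$. $\partial J(u)=\{\zeta: J(u)+\langle\zeta,v-u\rangle\le J(v)\ \forall v\}$; $\mathcal N(J)=\{u:J(u)=0\}$; $\mathcal H_0:=\mathcal N(J)^\perp\setminus\{0\}$. Rayleigh quotient $R(u):=pJ(u)/\|u\|^p$; standing coercivity assumption $\lambda_1:=\inf_{u\in\mathcal H_0}R(u)>0$; a ground state is a minimizer of $R$ over $\mathcal H_0$. The gradient flow solution (Brezis) is the unique continuous $u:[0,\infty)\to\mathcal H$, Lipschitz on $[\delta,\infty)$ for all $\delta>0$, right-differentiable on $(0,\infty)$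 with $u(0)=f$ and $\partial_t^+u(t)=-\zeta(t)$, $\zeta(t)$ the minimal-norm element of $\partial J(u(t))$. $T_{\mathrm{ex}}:=\inf\{T>0:u(t)=0\ \forall t\ge T\}$. $\Lambda(t):=R(u(t))$ for $0\le t<T_{\mathrm{ex}}$. *)

(* Defs.v *)
From HB Require Import structures.
From mathcomp Require Import all_boot all_order all_algebra.
From mathcomp Require Import all_classical all_reals all_analysis.
Set Implicit Arguments. Unset Strict Implicit. Unset Printing Implicit Defensive.
Import Order.TTheory GRing.Theory Num.Theory.
Import numFieldNormedType.Exports.
Local Open Scope classical_set_scope.
Local Open Scope ring_scope.

Section Setting.
Variables (R : realType) (V : completeNormedModType R).

(* [ip] is an inner product on V inducing the norm of V: V is a real Hilbert space. *)
Definition is_inner_product (ip : V -> V -> R) : Prop :=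
  (forall u v, ip u v = ip v u) /\
  (forall u v w, ip (u + v) w = ip u w + ip v w) /\
  (forall (c : R) u v, ip (c *: u) v = c * ip u v) /\
  (forall u, `|u| ^+ 2 = ip u u).

Definition admissible_functional (p : R) (J : V -> \bar R) : Prop :=
  (forall u, (-oo < J u)%E) /\
  (exists u, (J u < +oo)%E) /\
  (forall u v (t : R), 0 < t < 1 ->
     (J ((1 - t) *: u + t *: v)%R <= (1 - t)%:E * J u + t%:E * J v)%E) /\
  (forall u (a : R), (a%:E < J u)%E -> \forall v \near u, (a%:E < J v)%E) /\
  closure [set u | (J u < +oo)%E] = setT /\
  (forall (c : R) u, c != 0 -> J (c *: u)%R = ((`|c| `^ p)%:E * J u)%E) /\
  J 0 = 0%E.

Definition H0 (ip : V -> V -> R) (J : V -> \bar R) : set V :=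
  [set u | u != 0 /\ forall n, J n = 0%E -> ip u n = 0].

Definition rayleigh (p : R) (J : V -> \bar R) (u : V) : \bar R :=
  (p%:E * J u * ((`|u| `^ p)^-1)%:E)%E.

Definition lambda1 (ip : V -> V -> R) (p : R) (J : V -> \bar R) : \bar R :=
  ereal_inf [set rayleigh p J u | u in H0 ip J].

Definition ground_state (ip : V -> V -> R) (p : R) (J : V -> \bar R) (f : V) : Prop :=
  H0 ip J f /\ forall v, H0 ip J v -> (rayleigh p J f <= rayleigh p J v)%E.

Definition subdiff (ip : V -> V -> R) (J : V -> \bar R) (u : V) : set V :=
  [set z | forall v, (J u + (ip z (v - u)%R)%:E <= J v)%E].

Definition min_norm_subgrad (ip : V -> V -> R) (J : V -> \bar R) (u z : V) : Prop :=
  subdiff ip J u z /\ forall y, subdiff ip J u y -> `|z| <= `|y|.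

(* Brezis gradient-flow solution of  d/dt u + ∂J(u) ∋ 0, u(0) = f  on [0,oo) *)
Definition gradient_flow (ip : V -> V -> R) (J : V -> \bar R) (f : V) (u : R -> V) : Prop :=
  u 0 = f /\
  {within [set t : R | 0 <= t], continuous u} /\
  (forall d : R, 0 < d -> exists L : R, forall s t : R, d <= s -> d <= t ->
      `|u s - u t| <= L * `|s - t|) /\
  (forall t : R, 0 < t -> exists z : V, min_norm_subgrad ip J (u t) z /\
      (fun h : R => h^-1 *: (u (t + h) - u t)) @ 0^'+ --> - z).

Definition extinction_time (u : R -> V) (Tex : R) : Prop :=
  let S := [set T : R | 0 < T /\ forall t, T <= t -> u t = 0] in
  S !=set0 /\ Tex = inf S.

Definition scale_a (p Tex t : R) : R := (1 - t / Tex) `^ (1 / (2 - p)).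

End Setting.

(* Main.v *)
Require Import Defs.
From HB Require Import structures.
From mathcomp Require Import all_boot all_order all_algebra.
From mathcomp Require Import all_classical all_reals all_analysis.
From mathcomp Require Import ring lra.
Import Order.TTheory GRing.Theory Num.Theory.
Import numFieldNormedType.Exports.
Local Open Scope classical_set_scope.
Local Open Scope ring_scope.


Section IP.
Variables (R : realType) (V : completeNormedModType R) (ip : V -> V -> R).
Hypothesis ipP : is_inner_product ip.

Lemma ipC u v : ip u v = ip v u. Proof. by case: ipP. Qed.
Lemma ipDl u v w : ip (u + v) w = ip u w + ip v w. Proof. by case: ipP => _ []. Qed.
Lemma ipZl (c : R) u v : ip (c *: u) v = c * ip u v. Proof. by case: ipP => _ [] _ []. Qed.
Lemma ipnorm u : `|u| ^+ 2 = ip u u. Proof. by case: ipP => _ [] _ [] _. Qed.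
Lemma ipNl u v : ip (- u) v = - ip u v.
Proof. by rewrite -scaleN1r ipZl mulN1r. Qed.
Lemma ipBl u v w : ip (u - v) w = ip u w - ip v w.
Proof. by rewrite ipDl ipNl. Qed.
Lemma ipDr u v w : ip w (u + v) = ip w u + ip w v.
Proof. by rewrite ipC ipDl ![ip _ w]ipC. Qed.
Lemma ipZr (c : R) u v : ip v (c *: u) = c * ip v u.
Proof. by rewrite ipC ipZl ipC. Qed.
Lemma ipBr u v w : ip w (u - v) = ip w u - ip w v.
Proof. by rewrite ipC ipBl ![ip _ w]ipC. Qed.

Lemma polar u v : ip u v = (`|u + v| ^+ 2 - `|u - v| ^+ 2) / 4.
Proof.
have ipNr a b : ip a (- b) = - ip a b by rewrite ipC ipNl ipC.
rewrite !ipnorm !ipDl !ipDr !ipNl !ipNr (ipC v u).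
have -> : (4 : R) = 4%:R by [].
by field.
Qed.

Lemma ip_cvg {T} (F : set_system T) {FF : Filter F} (A B : T -> V) x y :
  A @ F --> x -> B @ F --> y -> (fun t => ip (A t) (B t)) @ F --> ip x y.
Proof.
move=> Ax By.
have -> : (fun t => ip (A t) (B t)) = (fun t => (`|A t + B t| ^+ 2 - `|A t - B t| ^+ 2) / 4).
  by apply: funext => t; rewrite polar.
rewrite polar.
apply: cvgM; last exact: cvg_cst.
apply: cvgB; apply: cvgM; apply: cvg_norm.
- exact: cvgD.
- exact: cvgD.
- exact: cvgB.
- exact: cvgB.
Qed.
End IP.


Section Dini.
Variable R : realType.

Lemma dini_noninc (k : R -> R) (a b : R) :
  a <= b ->
  (forall t, a <= t -> t <= b -> forall e : R, 0 < e -> exists2 d : R, 0 < d &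
      forall s, a <= s -> s <= b -> `|s - t| < d -> `|k s - k t| < e) ->
  (forall t, a < t -> t < b -> forall eta : R, 0 < eta -> exists2 d : R, 0 < d &
      forall h : R, 0 < h -> h < d -> k (t + h) - k t <= eta * h) ->
  k b <= k a.
Proof.
move=> ab Hc Hd.
suff key : forall eta : R, 0 < eta -> k b <= k a + eta * (b - a) + eta.
  apply/ler_addgt0Pr => e e0.
  have h1 : 0 < b - a + 1 by lra.
  have := key (e / (b - a + 1)) (divr_gt0 e0 h1).
  rewrite -addrA.
  have -> : e / (b - a + 1) * (b - a) + e / (b - a + 1) = e.
    by field; lra.
  done.
move=> eta eta0.
pose phi r := k a + eta * (r - a) + eta.
pose S := [set s | a <= s <= b /\ forall r, a <= r -> r <= s -> k r <= phi r].
have Sa : S a.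
  split; first by rewrite lexx ab.
  move=> r ar ra; have -> : r = a by apply/eqP; rewrite eq_le ar ra.
  rewrite /phi subrr mulr0 addr0; lra.
have hs : has_sup S.
  split; first by exists a.
  by exists b => s [/andP[_ ->]].
set c := sup S.
have cub := sup_upper_bound hs.
have ac : a <= c by apply: cub.
have cb : c <= b by apply: ge_sup; [exists a | move=> s [/andP[_ ->]]].
have claim1 : forall r, a <= r -> r < c -> k r <= phi r.
  move=> r ar rc.
  have [s [_ Ss] rs] := @sup_adherent _ S (c - r) ltac:(by rewrite subr_gt0) hs.
  apply: Ss => //; move: rs; rewrite -/c; lra.
have claim2 : k c <= phi c.
  rewrite leNgt; apply/negP => Hlt.
  have z0 : 0 < (k c - phi c) / 2 by apply: divr_gt0; lra.
  have [d d0 Hd1] := Hc c ac cb _ z0.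
  have [s [/andP[a_s sb] Ss] cs] := sup_adherent d0 hs.
  have sc : s <= c by apply: cub; split => //; rewrite a_s sb.
  have : `|s - c| < d by move: cs; rewrite -/c ltr_norml => cs; apply/andP; split; lra.
  move=> /(Hd1 s a_s sb); rewrite ltr_norml => /andP[h1 h2].
  have := Ss s a_s (lexx s).
  rewrite /phi in Hlt h1 h2 *; move: Hlt; rewrite -/c => Hlt.
  have : eta * (s - a) <= eta * (c - a) by rewrite ler_pM2l //; lra.
  lra.
have claim3 : forall r, a <= r -> r <= c -> k r <= phi r.
  move=> r ar; rewrite le_eqVlt => /orP[/eqP -> //|]; exact: claim1.
have cbe : c = b.
  apply/eqP; rewrite eq_le cb /=; rewrite leNgt; apply/negP => cltb.
  have [d d0 Hd2] : exists2 d : R, 0 < d & forall h : R, 0 < h -> h < d -> k (c + h) <= phi (c + h).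
    have [ca|ac'] := eqVneq c a.
      have [d d0 Hd1] := Hc a (lexx a) ab _ eta0.
      exists (Num.min d (b - a)); first by rewrite lt_min d0 subr_gt0 -ca.
      move=> h h0; rewrite lt_min => /andP[hd hb].
      have := Hd1 (c + h); rewrite ca => /(_ _ _ _).
      have hh : `|a + h - a| < d by rewrite addrC addKr gtr0_norm.
      move=> /(_ _ _ hh); rewrite ltr_norml => H; have {H} [_ H] := andP (H ltac:(lra) ltac:(lra)).
      rewrite /phi; have : 0 <= eta * (a + h - a) by rewrite mulr_ge0 //; lra.
      lra.
    have act : a < c by rewrite lt_neqAle eq_sym ac' ac.
    have [d d0 Hd1] := Hd c act cltb _ eta0.
    exists d => // h h0 hd; have := Hd1 h h0 hd; have := claim3 c ac (lexx c).
    rewrite /phi; have -> : c + h - a = (c - a) + h by ring.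
    lra.
  pose h := Num.min d (b - c) / 2.
  have h0 : 0 < h by rewrite /h divr_gt0 // lt_min d0 subr_gt0.
  have hd : h < d.
    rewrite /h; have : Num.min d (b - c) <= d by rewrite ge_min lexx.
    lra.
  have hb : h <= b - c.
    rewrite /h; have : Num.min d (b - c) <= b - c by rewrite ge_min lexx orbT.
    lra.
  have : S (c + h).
    split; first by apply/andP; split; lra.
    move=> r ar rch; have [rc|cr] := leP r c; first exact: claim3.
    have -> : r = c + (r - c) by ring.
    apply: Hd2; lra.
  move=> /cub; rewrite -/c; lra.
by have := claim3 b ab; rewrite -cbe => /(_ (lexx _)).
Qed.
End Dini.


Section Young.
Variable R : realType.

Lemma young01 (th y : R) : 0 <= th <= 1 -> 0 <= y -> y `^ th <= 1 - th + th * y.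
Proof.
move=> /andP[th0 th1] y0.
have [->|th0'] := eqVneq th 0; first by rewrite powRr0 subr0 mul0r addr0.
have [->|th1'] := eqVneq th 1; first by rewrite powRr1 // subrr mul1r add0r.
have tp : 0 < th by rewrite lt_neqAle eq_sym th0' th0.
have tq : 0 < 1 - th by rewrite subr_gt0 lt_neqAle th1' th1.
have := @conjugate_powR R (y `^ th) 1 th^-1 (1 - th)^-1 (powR_ge0 _ _) ler01
  (ltac:(by rewrite invr_gt0)) (ltac:(by rewrite invr_gt0)) ltac:(by rewrite !invrK; ring).
rewrite mulr1 -powRrM mulfV ?gt_eqF // powRr1 // powR1 !invrK.
lra.
Qed.

Lemma young_tangent (th x y : R) : 0 <= th <= 1 -> 0 < x -> 0 <= y ->
  y `^ th <= x `^ th + th * x `^ (th - 1) * (y - x).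
Proof.
move=> th01 x0 y0.
have := @young01 th (y / x) th01 (divr_ge0 y0 (ltW x0)).
have e1 : y `^ th = (y / x) `^ th * x `^ th.
  rewrite -powRM; [|exact: divr_ge0 y0 (ltW x0)|exact: ltW].
  by rewrite divfK // gt_eqF.
have e2 : x `^ (th - 1) = x `^ th / x.
  rewrite powRB ?powRr1 ?ltW //; apply/implyP => _; rewrite gt_eqF //.
move=> H; rewrite e1 e2.
have xt : 0 < x `^ th by apply: powR_gt0.
have H2 := ler_wpM2r (ltW xt) H.
apply: (le_trans H2).
rewrite le_eqVlt; apply/orP; left; apply/eqP; field; rewrite gt_eqF //.
Qed.

Lemma small_le0 (x A : R) : 0 <= A -> (forall s, 0 < s -> s < 1 -> x <= A * s) -> x <= 0.
Proof.
move=> A0 H; apply/ler_addgt0Pr => e e0; rewrite add0r.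
have d0 : 0 < A + 2 * e by lra.
have := H (e / (A + 2 * e)) (divr_gt0 e0 d0).
rewrite ltr_pdivrMr // mul1r => /(_ ltac:(lra)) /le_trans; apply.
rewrite mulrA ler_pdivrMr //; nra.
Qed.
End Young.


Section Helpers.
Variable R : realType.

Lemma powR_cont (x r : R) : 0 < x -> {for x, continuous (fun y : R => y `^ r)}.
Proof.
move=> x0; apply: differentiable_continuous; apply/derivable1_diffP.
by have [] := @is_derive1_powR R r x x0.
Qed.

Lemma within_ed (k : R -> R) (A : set R) t :
  k @ within A (nbhs t) --> k t ->
  forall e : R, 0 < e -> exists2 d : R, 0 < d & forall s, A s -> `|s - t| < d -> `|k s - k t| < e.
Proof.
move=> kc e e0.
have := @cvgr_dist_lt _ _ _ _ (within_filter A (nbhs_filter t)) k (k t) kc e e0.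
move=> H.
have /nbhs_ballP [d /= d0 Hd] : nbhs t (fun s => A s -> `|k t - k s| < e) by exact: H.
exists d => // s As st.
rewrite distrC; apply: Hd => //.
by rewrite /ball /= distrC.
Qed.

Lemma dini_from (k : R -> R) t (B : R -> R) (l eta : R) :
  B @ 0^'+ --> l -> l < eta ->
  (\forall h \near 0^'+, (k (t + h) - k t) / h <= B h) ->
  exists2 d : R, 0 < d & forall h : R, 0 < h -> h < d -> k (t + h) - k t <= eta * h.
Proof.
move=> Bl leta Hq.
have Bn := @cvgr_lt _ _ _ (at_right_proper_filter 0) B l Bl eta leta.
have := filterI Bn Hq => H.
have /nbhs_ballP [d /= d0 Hd] : nbhs (0 : R) (fun h => 0 < h -> B h < eta /\ (k (t + h) - k t) / h <= B h) by exact: H.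
exists d => // h h0 hd.
have [H1 H2] : B h < eta /\ (k (t + h) - k t) / h <= B h.
  apply: Hd => //; rewrite /ball /= sub0r normrN gtr0_norm //.
have : (k (t + h) - k t) / h < eta by apply: le_lt_trans H2 H1.
by rewrite ltr_pdivrMr // => /ltW; rewrite mulrC.
Qed.

End Helpers.


Section Main.
Variables (R : realType) (V : completeNormedModType R) (ip : V -> V -> R).
Variables (p : R) (J : V -> \bar R) (f : V) (u : R -> V).
Hypothesis ipP : is_inner_product ip.
Hypothesis JA : admissible_functional p J.
Hypothesis p1 : 1 <= p.
Hypothesis p2 : p < 2.
Hypothesis Hf : H0 ip J f.
Hypothesis Hflow : gradient_flow ip J f u.

Let J_body := tt.
Lemma J_ninf vv : (-oo < J vv)%E. Proof. by case: JA. Qed.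
Lemma J_conv vv v (t : R) : 0 < t < 1 ->
     (J ((1 - t) *: vv + t *: v)%R <= (1 - t)%:E * J vv + t%:E * J v)%E.
Proof. by case: JA => _ [_ [H _]]; apply: H. Qed.
Lemma J_hom (c : R) vv : c != 0 -> J (c *: vv) = ((`|c| `^ p)%:E * J vv)%E.
Proof. by case: JA => _ [_ [_ [_ [_ [H _]]]]]; apply: H. Qed.
Lemma J_0 : J 0 = 0%E.
Proof. by case: JA => _ [_ [_ [_ [_ [_ H]]]]]. Qed.

Lemma J_ge0 vv : (0 <= J vv)%E.
Proof.
have Jn : J (- vv) = J vv by rewrite -scaleN1r J_hom ?oppr_eq0 ?oner_eq0 // normrN normr1 powR1 mul1e.
have := @J_conv vv (- vv) (1/2) ltac:(apply/andP; split; lra).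
have -> : (1 - 1/2) *: vv + (1/2) *: (- vv) = 0.
  have -> : (1 - 1/2 : R) = 1/2 by field.
  by rewrite scalerN subrr.
rewrite J_0 Jn.
have := J_ninf vv; case: (J vv) => [r _| _ _|//]; last by rewrite leey.
move=> H; have : (0 <= ((1 - 1 / 2) * r + (1 / 2) * r)%:E)%E by rewrite EFinD !EFinM.
rewrite lee_fin lee_fin; lra.
Qed.

Lemma subdiff_fin vv z : subdiff ip J vv z -> exists j : R, J vv = j%:E.
Proof.
move=> Hz; case: JA => _ [[v0 Jv0] _].
move: (J_ninf vv) (Hz v0); case: (J vv) => [r _ _| _ /= H | //]; first by exists r.
exfalso; move: Jv0; rewrite ltNge => /negP; apply; exact: H.
Qed.

Lemma subdiff_ineq vv z v j : subdiff ip J vv z -> J vv = j%:E -> J v = (J v) ->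
  (j%:E + (ip z (v - vv))%:E <= J v)%E.
Proof. by move=> Hz Ju _; rewrite -Ju; apply: Hz. Qed.


Lemma J_fin_ge0 vv j : J vv = j%:E -> 0 <= j.
Proof. by move=> Ju; have := J_ge0 vv; rewrite Ju lee_fin. Qed.

Lemma euler vv z j : subdiff ip J vv z -> J vv = j%:E -> p * j <= ip z vv.
Proof.
move=> Hz Ju.
have j0 := @J_fin_ge0 vv j Ju.
have p1' := p1; have p2' := p2.
have p0 : 0 < p by lra.
rewrite -subr_le0; apply: (@small_le0 _ _ ((p - 1) * j)); first by apply: mulr_ge0 => //; lra.
move=> s s0 s1.
pose c := 1 - s.
have c0 : 0 < c by rewrite /c; lra.
have H := Hz (c *: vv).
rewrite Ju J_hom ?gt_eqF // Ju gtr0_norm // -EFinM -EFinD lee_fin in H.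
rewrite (@ipBr _ _ _ ipP) (@ipZr _ _ _ ipP) -mulr_powRB1 ?(ltW c0) // in H.
have Y := @young01 _ (p - 1) c ltac:(apply/andP; split; lra) (ltW c0).
have Y2 : c * c `^ (p - 1) * j <= c * (1 - (p - 1) + (p - 1) * c) * j.
  by apply: ler_wpM2r => //; apply: ler_wpM2l => //; exact: ltW.
have key : s * (p * j - ip z vv) <= s * ((p - 1) * j * s).
  rewrite /c in H Y2; nra.
by rewrite ler_pM2l in key.
Qed.


Lemma null_orth_c vv z j n (c : R) : subdiff ip J vv z -> J vv = j%:E -> J n = 0%E -> c != 0 ->
  c * ip z n <= 0.
Proof.
move=> Hz Ju Jn c0.
have p1' := p1; have p2' := p2.
have p0 : 0 < p by lra.
have j0 := @J_fin_ge0 vv j Ju.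
apply: (@small_le0 _ _ ((p - 1) * j)); first by apply: mulr_ge0 => //; lra.
move=> s s0 s1.
pose t := s / 2.
have t0 : 0 < t by rewrite /t; lra.
have t1 : t < 1 by rewrite /t; lra.
pose w := (1 - t)^-1.
have w0 : 0 < w by rewrite /w invr_gt0; lra.
have wt : w * (1 - t) = 1 by rewrite /w mulVf // gt_eqF //; lra.
have H := Hz (vv + c *: n).
have E : (1 - t) *: (w *: vv) + t *: (t^-1 *: (c *: n)) = vv + c *: n.
  by rewrite !scalerA [(1 - t) * w]mulrC wt mulfV ?gt_eqF // mul1r scale1r.
have C := @J_conv (w *: vv) (t^-1 *: (c *: n)) t ltac:(apply/andP; split; lra).
rewrite E (@J_hom w vv (lt0r_neq0 w0)) Ju (@J_hom t^-1 _ (invr_neq0 (lt0r_neq0 t0))) (@J_hom c n c0) Jn in C.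
rewrite !mule0 adde0 -!EFinM in C.
have H2 := le_trans H C.
rewrite Ju -EFinD lee_fin in H2.
have E2 : vv + c *: n - vv = c *: n by rewrite addrC addKr.
rewrite E2 in H2.
rewrite (@ipZr _ _ _ ipP) gtr0_norm // -mulr_powRB1 ?(ltW w0) // in H2.
have Y := @young01 _ (p - 1) w ltac:(apply/andP; split; lra) (ltW w0).
have Y2 : (1 - t) * (w * w `^ (p - 1) * j) <= (1 - t) * (w * (1 - (p - 1) + (p - 1) * w) * j).
  apply: ler_wpM2l; first lra.
  by apply: ler_wpM2r => //; apply: ler_wpM2l => //; exact: ltW.
have ws : w - 1 <= s.
  have : (w - 1) * (1 - t) = t by nra.
  rewrite /t => h; nra.
have E3 : (1 - t) * (w * (1 - (p - 1) + (p - 1) * w) * j) = (1 - (p - 1) + (p - 1) * w) * j.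
  by rewrite !mulrA [(1 - t) * w]mulrC wt mul1r.
have pj : 0 <= (p - 1) * j by apply: mulr_ge0 => //; lra.
have := ler_wpM2l pj ws.
lra.
Qed.

Lemma null_orth vv z j n : subdiff ip J vv z -> J vv = j%:E -> J n = 0%E -> ip z n = 0.
Proof.
move=> Hz Ju Jn.
have h1 := @null_orth_c vv z j n 1 Hz Ju Jn (oner_neq0 _).
have h2 := @null_orth_c vv z j n (-1) Hz Ju Jn ltac:(by rewrite oppr_eq0 oner_eq0).
lra.
Qed.


Let A0 : set R := [set s | 0 <= s].
Let m (r : R) := ip (u r) (u r).
Let D (t h : R) := h^-1 *: (u (t + h) - u t).

Let ipC' := @ipC _ _ _ ipP.
Let ipDl' := @ipDl _ _ _ ipP.
Let ipDr' := @ipDr _ _ _ ipP.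
Let ipBl' := @ipBl _ _ _ ipP.
Let ipBr' := @ipBr _ _ _ ipP.
Let ipZl' := @ipZl _ _ _ ipP.
Let ipZr' := @ipZr _ _ _ ipP.
Let ipNl' := @ipNl _ _ _ ipP.
Let ipnorm' := @ipnorm _ _ _ ipP.

Lemma u0 : u 0 = f. Proof. by case: Hflow. Qed.

Lemma ucont (t : R) : 0 <= t -> u @ within A0 (nbhs t) --> u t.
Proof.
move=> t0; case: Hflow => _ [C _].
have H := C t.
rewrite (@nbhs_subspace_in _ A0 t t0).
exact: H.
Qed.

Lemma uder (t : R) : 0 < t -> exists z, min_norm_subgrad ip J (u t) z /\ D t @ 0^'+ --> - z.
Proof. by move=> t0; case: Hflow => _ [_ [_ H]]; apply: H. Qed.


Lemma hcvg : (fun h : R => h) @ 0^'+ --> (0 : R).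
Proof. exact: cvg_at_right_filter cvg_id. Qed.

Lemma uright (t : R) (z : V) : D t @ 0^'+ --> z -> (fun h : R => u (t + h)) @ (0 : R)^'+ --> (u t : V).
Proof.
move=> Dz.
have E : \forall h \near 0^'+, u t + h *: D t h = u (t + h).
  near=> h.
  have h0 : h != 0.
    by apply: lt0r_neq0; near: h; exact: nbhs_right_gt.
  rewrite /D scalerA mulfV // scale1r.
  by rewrite addrC subrK.
have L : (fun h : R => u t + h *: D t h) @ (0:R)^'+ --> (u t + 0 *: z : V).
  apply: cvgD; first exact: cvg_cst.
  apply: cvgZ => //; exact: hcvg.
rewrite scale0r addr0 in L.
exact: (cvg_trans (near_eq_cvg E) L).
Unshelve. all: by end_near.
Qed.
Lemma ip_diff x y : ip x x - ip y y = ip (x - y) (x + y).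
Proof.
rewrite ipBl' !ipDr' (ipC' y x); ring.
Qed.

Lemma mquot_cvg (t : R) (z : V) : D t @ 0^'+ --> - z ->
  (fun h : R => (m (t + h) - m t) / h) @ (0:R)^'+ --> ip (- z) (u t + u t).
Proof.
move=> Dz.
have E : \forall h \near 0^'+, ip (D t h) (u (t + h) + u t) = (m (t + h) - m t) / h.
  by near=> h; rewrite /m ip_diff /D ipZl' mulrC.
have L : (fun h : R => ip (D t h) (u (t + h) + u t)) @ (0:R)^'+ --> ip (- z) (u t + u t).
  apply: ip_cvg => //.
  apply: cvgD; last exact: cvg_cst.
  exact: uright Dz.
exact: (cvg_trans (near_eq_cvg E) L).
Unshelve. all: by end_near.
Qed.

Let ip_cvg' := @ip_cvg _ _ _ ipP.

Lemma mcont (t : R) : 0 <= t -> m @ within A0 (nbhs t) --> m t.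
Proof. by move=> t0; apply: ip_cvg'; exact: ucont. Qed.

Lemma noninc_gen (k : R -> R) (a b : R) : 0 <= a -> a <= b ->
  (forall r : R, a <= r -> r <= b -> k @ within A0 (nbhs r) --> k r) ->
  (forall r : R, a < r -> r < b -> forall eta : R, 0 < eta -> exists2 d : R, 0 < d &
     forall h : R, 0 < h -> h < d -> k (r + h) - k r <= eta * h) ->
  k b <= k a.
Proof.
move=> a0 ab Hc Hd; apply: dini_noninc => //.
move=> r ar rb e e0.
have [d d0 Hd1] := @within_ed _ k A0 r (Hc r ar rb) e e0.
exists d => // s a_s sb; apply: Hd1; rewrite /A0 /=; exact: le_trans a_s.
Qed.

Lemma ip_mz_le0 (r : R) z : 0 < r -> subdiff ip J (u r) z -> ip (- z) (u r + u r) <= 0.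
Proof.
move=> r0 Hz.
have [j Ju] := @subdiff_fin _ _ Hz.
have := @euler _ _ _ Hz Ju; have := @J_fin_ge0 _ _ Ju.
have p1' := p1.
rewrite ipNl' ipDr' => h1 h2.
have : 0 <= p * j by apply: mulr_ge0 => //; lra.
lra.
Qed.

Lemma m_noninc (s t : R) : 0 <= s -> s <= t -> m t <= m s.
Proof.
move=> s0 st; apply: noninc_gen => //.
  move=> r sr _; apply: mcont; exact: le_trans sr.
move=> r sr rt eta eta0.
have r0 : 0 < r by apply: le_lt_trans sr.
have [z [[Hz _] Dz]] := @uder r r0.
apply: (@dini_from _ m r (fun h => (m (r + h) - m r) / h) (ip (- z) (u r + u r))).
- exact: mquot_cvg.
- exact: le_lt_trans (@ip_mz_le0 r z r0 Hz) eta0.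
- by apply: nearW => h.
Qed.

Lemma m_eq0 (t : R) : m t <= 0 -> u t = 0.
Proof.
rewrite /m -ipnorm' => h.
have : `|u t| ^+ 2 = 0 by apply/eqP; rewrite eq_le h sqr_ge0.
by move/eqP; rewrite expf_eq0 /= normr_eq0 => /eqP.
Qed.

Lemma u_ne0 (Tex t : R) : extinction_time u Tex -> 0 <= t -> t < Tex -> u t != 0.
Proof.
move=> [Sne TexE] t0 tT; apply/negP => /eqP ut.
have tpos : 0 < t.
  rewrite lt_neqAle t0 andbT; apply/negP => /eqP t0'.
  by move: Hf => [+ _]; rewrite -u0 t0' ut eqxx.
set S := [set T : R | 0 < T /\ (forall t : R, T <= t -> u t = 0)] in Sne TexE.
have St : S t.
  split => // s ts; apply: m_eq0.
  have := @m_noninc t s (ltW tpos) ts; rewrite /m ut.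
  by rewrite -(ipnorm' 0) normr0 expr0n.
have lb : has_lbound S by exists 0 => x [/ltW].
have := ge_inf lb St; rewrite -TexE => h.
by move: tT; rewrite ltNge h.
Qed.

Lemma H0_inv (t : R) n : 0 <= t -> J n = 0%E -> ip (u t) n = 0.
Proof.
move=> t0 Jn.
pose k r := ip (u r) n.
have kc : forall r : R, 0 <= r -> k @ within A0 (nbhs r) --> k r.
  move=> r r0; apply: ip_cvg'; [exact: ucont | exact: cvg_cst].
have kd : forall r : R, 0 < r -> exists2 l : R, l = 0 &
    (fun h : R => (k (r + h) - k r) / h) @ (0:R)^'+ --> l.
  move=> r r0.
  have [z [[Hz _] Dz]] := @uder r r0.
  have [j Ju] := @subdiff_fin _ _ Hz.
  exists (ip (- z) n); first by rewrite ipNl' (@null_orth _ _ j n Hz Ju Jn) oppr0.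
  have E : \forall h \near 0^'+, ip (D r h) n = (k (r + h) - k r) / h.
    by near=> h; rewrite /k /D ipZl' ipBl' mulrC.
  have L : (fun h : R => ip (D r h) n) @ (0:R)^'+ --> ip (- z) n.
    by apply: ip_cvg' => //; exact: cvg_cst.
  exact: (cvg_trans (near_eq_cvg E) L).
have h1 : k t <= k 0.
  apply: noninc_gen => //; first by move=> r r0 _; exact: kc.
  move=> r r0 rt eta eta0.
  have [l l0 Hl] := kd r r0.
  apply: (@dini_from _ k r (fun h : R => (k (r + h) - k r) / h) l) => //; first by rewrite l0.
  by apply: nearW => h.
have h2 : - k t <= - k 0.
  apply: (@noninc_gen (fun r => - k r)) => //.
    move=> r r0 _; apply: cvgN; exact: kc.
  move=> r r0 rt eta eta0.
  have [l l0 Hl] := kd r r0.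
  apply: (@dini_from _ (fun r => - k r) r (fun h : R => - ((k (r + h) - k r) / h)) (- l)).
  - exact: cvgN Hl.
  - by rewrite l0 oppr0.
  - apply: nearW => h; rewrite le_eqVlt; apply/orP; left; apply/eqP.
    rewrite -mulNr; congr (_ * _); ring.
have : k 0 = 0 by rewrite /k u0; move: Hf => [_ H]; apply: H.
move: h1 h2; rewrite /k => h1 h2 h3.
have h4 := h3; rewrite h3 in h1 h2 *; lra.
Unshelve. all: by end_near.
Qed.

Let q : R := (2 - p) / 2.
Let G (L r : R) := (m r) `^ q + (2 - p) * L * r.

Lemma m_ge0 (r : R) : 0 <= m r.
Proof. by rewrite /m -ipnorm' sqr_ge0. Qed.

Lemma m_gt0 (r : R) : u r != 0 -> 0 < m r.
Proof. by move=> h; rewrite /m -ipnorm' exprn_gt0 // normr_gt0. Qed.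

Lemma Gcont (L r : R) : 0 <= r -> u r != 0 -> G L @ within A0 (nbhs r) --> G L r.
Proof.
move=> r0 ur.
apply: cvgD.
  have := @continuous_cvg _ _ _ _ _ m (fun y : R => y `^ q) (m r) (@powR_cont _ (m r) q (@m_gt0 r ur)) (@mcont r r0).
  by apply; exact: within_filter.
apply: cvgM; first exact: cvg_cst.
exact: cvg_within_filter cvg_id.
Qed.

Lemma norm_pow (v : V) (r : R) : `|v| `^ r = (ip v v) `^ (r / 2).
Proof.
rewrite -ipnorm' -powR_mulrn // -powRrM; congr (_ `^ _).
by have -> : (2%:R : R) = 2 by []; field.
Qed.

Lemma G_noninc (L a b : R) : 0 <= a -> a <= b ->
  (forall r : R, a <= r -> r <= b -> u r != 0) ->
  (forall r : R, a < r -> r < b -> forall j : R, J (u r) = j%:E -> L * (m r) `^ (p / 2) <= p * j) ->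
  G L b <= G L a.
Proof.
move=> a0 ab Hne HL.
have p1' := p1; have p2' := p2.
apply: noninc_gen => //.
  move=> r ar rb; apply: Gcont; [exact: le_trans ar | exact: Hne].
move=> r ar rb eta eta0.
have r0 : 0 < r by apply: le_lt_trans ar.
have [z [[Hz _] Dz]] := @uder r r0.
have [j Ju] := @subdiff_fin _ _ Hz.
have Eu := @euler _ _ _ Hz Ju.
have HLr := HL r ar rb j Ju.
have ur : u r != 0 by apply: Hne; [exact: ltW | exact: ltW].
set x := m r.
have x0 : 0 < x := @m_gt0 r ur.
pose c := x `^ (q - 1).
have c0 : 0 <= c := powR_ge0 _ _.
have cX : c * x `^ (p / 2) = 1.
  rewrite /c -powRD; last by apply/implyP => _; rewrite gt_eqF.
  have -> : q - 1 + p / 2 = 0 by rewrite /q; field.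
  by rewrite powRr0.
apply: (@dini_from _ (G L) r (fun h : R => q * c * ((m (r + h) - m r) / h) + (2 - p) * L)
   (q * c * ip (- z) (u r + u r) + (2 - p) * L)).
- apply: cvgD; last exact: cvg_cst.
  apply: cvgM; first exact: cvg_cst.
  exact: mquot_cvg.
- rewrite ipNl' ipDr'.
  set I := ip z (u r).
  have cI : L <= c * I.
    have : c * (L * x `^ (p / 2)) <= c * I.
      apply: ler_wpM2l => //; move: HLr Eu; rewrite -/x -/I; lra.
    by rewrite mulrCA cX mulr1.
  have -> : q * c * - (I + I) = - (2 - p) * (c * I) by rewrite /q; field.
  have : 0 <= (2 - p) * (c * I - L) by apply: mulr_ge0; lra.
  nra.
- near=> h.
  have h0 : 0 < h by near: h; exact: nbhs_right_gt.
  rewrite ler_pdivrMr //.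
  have Y := @young_tangent _ q x (m (r + h)) ltac:(rewrite /q; apply/andP; split; lra) x0 (m_ge0 (r + h)).
  have -> : (q * c * ((m (r + h) - m r) / h) + (2 - p) * L) * h
          = q * c * (m (r + h) - m r) + (2 - p) * L * h.
    by field; rewrite gt_eqF.
  rewrite /G /c -/x.
  have -> : m (r + h) `^ q + (2 - p) * L * (r + h) - (x `^ q + (2 - p) * L * r)
          = m (r + h) `^ q - x `^ q + (2 - p) * L * h by ring.
  rewrite -/x in Y; lra.
Unshelve. all: by end_near.
Qed.

Lemma Jlsc (v : V) (a : R) : (a%:E < J v)%E -> \forall w \near v, (a%:E < J w)%E.
Proof. by case: JA => _ [_ [_ [H _]]]; apply: H. Qed.

Lemma main_sec (lam1 Tex : R) : lambda1 ip p J = lam1%:E -> 0 < lam1 ->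
  extinction_time u Tex -> Tex = `|f| `^ (2 - p) / ((2 - p) * lam1) ->
  (forall t : R, 0 <= t < Tex -> rayleigh p J (u t) = lam1%:E) /\ ground_state ip p J f.
Proof.
move=> Hlam lam0 Hext HT.
have p1' := p1; have p2' := p2.
have p0 : 0 < p by lra.
have fne : f != 0 by case: Hf.
have Tpos : 0 < Tex.
  rewrite HT; apply: divr_gt0; first by apply: powR_gt0; rewrite normr_gt0.
  by apply: mulr_gt0 => //; lra.
have uH0 : forall t : R, 0 <= t -> t < Tex -> H0 ip J (u t).
  move=> t t0 tT; split; first exact: (@u_ne0 Tex t Hext t0 tT).
  by move=> n Jn; apply: H0_inv.
have ray_ge : forall t : R, 0 <= t -> t < Tex -> (lam1%:E <= rayleigh p J (u t))%E.
  move=> t t0 tT; rewrite -Hlam; apply: ereal_inf_lbound; exists (u t) => //.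
  exact: uH0.
have Npos : forall t : R, 0 <= t -> t < Tex -> 0 < `|u t| `^ p.
  by move=> t t0 tT; apply: powR_gt0; rewrite normr_gt0; exact: (@u_ne0 Tex t Hext t0 tT).
have ray_real : forall t : R, 0 <= t -> t < Tex -> forall j : R, J (u t) = j%:E ->
    lam1 * (m t) `^ (p / 2) <= p * j.
  move=> t t0 tT j Ju.
  have := ray_ge t t0 tT; rewrite /rayleigh Ju -!EFinM lee_fin.
  rewrite /m -norm_pow => h.
  by rewrite -ler_pdivlMr ?Npos.
have Hmain : forall t : R, 0 <= t -> t < Tex -> rayleigh p J (u t) = lam1%:E.
  move=> t t0 tT.
  apply/eqP; rewrite eq_le ray_ge // andbT leNgt; apply/negP => Hgt.
  have ut0 : u t != 0 := @u_ne0 Tex t Hext t0 tT.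
  set N := `|u t| `^ p.
  have N0 : 0 < N := Npos t t0 tT.
  have [eps eps0 HJ] : exists2 eps : R, 0 < eps & (((lam1 + 2 * eps) * N / p)%:E < J (u t))%E.
    move: Hgt; rewrite /rayleigh -/N.
    have := J_ninf (u t); case: (J (u t)) => [j0 _ | _ _ | //].
      rewrite -!EFinM lte_fin => Hgt.
      set K := p * j0 * N^-1 in Hgt.
      exists ((K - lam1) / 3); first by apply: divr_gt0; lra.
      rewrite lte_fin.
      have -> : j0 = K * N / p by rewrite /K; field; apply/andP; split; rewrite gt_eqF.
      rewrite ltr_pM2r ?invr_gt0 // ltr_pM2r //; lra.
    by exists 1 => //; rewrite ltey.
  set a := (lam1 + 2 * eps) * N / p.
  have H1 := @Jlsc (u t) a HJ.
  have nut : 0 < `|u t| by rewrite normr_gt0.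
  have Hn : (fun w : V => (lam1 + eps) * `|w| `^ p) @ u t --> (lam1 + eps) * N.
    apply: cvgM; first exact: cvg_cst.
    have := @continuous_cvg _ _ _ _ _ (fun w : V => `|w|) (fun y : R => y `^ p) `|u t|
      (@powR_cont _ `|u t| p nut) (@norm_continuous _ _ (u t)).
    by apply; exact: nbhs_filter.
  have H2 := @cvgr_lt _ _ _ (nbhs_filter (u t)) _ _ Hn ((lam1 + 2 * eps) * N) ltac:(rewrite ltr_pM2r //; lra).
  have H12 := filterI H1 H2.
  have /nbhs_ballP [d /= d0 Hd] : nbhs t (fun s => A0 s ->
     ((a%:E < J (u s))%E /\ (lam1 + eps) * `|u s| `^ p < (lam1 + 2 * eps) * N)).
    have HP := @ucont t t0 _ (H12 (nbhs_filter (u t))).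
    exact: HP.
  have HLe : forall r : R, t < r -> r < t + d -> forall j : R, J (u r) = j%:E ->
      (lam1 + eps) * (m r) `^ (p / 2) <= p * j.
    move=> r tr rd j Ju.
    have [h1 h2] : ((a%:E < J (u r))%E /\ (lam1 + eps) * `|u r| `^ p < (lam1 + 2 * eps) * N).
      apply: Hd; last by rewrite /A0 /=; apply: le_trans (ltW tr).
      by rewrite /ball /= ltr_norml; apply/andP; split; lra.
    rewrite Ju lte_fin in h1.
    rewrite /m -norm_pow.
    have h3 : a * p < j * p by rewrite ltr_pM2r.
    have h4 : a * p = (lam1 + 2 * eps) * N by rewrite /a; field; rewrite gt_eqF.
    lra.
  pose b := Num.min (t + d / 2) ((t + Tex) / 2).
  have bt : t < b by rewrite /b lt_min; apply/andP; split; lra.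
  have bT : b < Tex by rewrite /b gt_min; apply/orP; right; lra.
  have bd : b <= t + d / 2 by rewrite /b ge_min lexx.
  pose kk := Num.min (eps * (b - t) / (2 * lam1)) ((Tex - b) / 2).
  have kk0 : 0 < kk.
    rewrite /kk lt_min; apply/andP; split; last lra.
    by apply: divr_gt0; [apply: mulr_gt0; lra | lra].
  have kk1 : kk <= eps * (b - t) / (2 * lam1) by rewrite /kk ge_min lexx.
  have kk2 : kk <= (Tex - b) / 2 by rewrite /kk ge_min lexx orbT.
  pose T := Tex - kk.
  have bT' : b < T by rewrite /T; lra.
  have TT : T < Tex by rewrite /T; lra.
  have ne : forall r : R, 0 <= r -> r <= T -> u r != 0.
    by move=> r r0 rT; apply: (@u_ne0 Tex r Hext r0); lra.
  have g1 : G lam1 t <= G lam1 0.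
    apply: G_noninc => //.
      by move=> r r0 rt; apply: ne => //; lra.
    by move=> r r0 rt j Ju; apply: ray_real Ju; lra.
  have g2 : G (lam1 + eps) b <= G (lam1 + eps) t.
    apply: G_noninc => //; first exact: ltW.
      by move=> r r0 rt; apply: ne; lra.
    by move=> r r0 rt j Ju; apply: HLe Ju; lra.
  have g3 : G lam1 T <= G lam1 b.
    apply: G_noninc; [lra | exact: ltW | | ].
      by move=> r r0 rt; apply: ne; lra.
    by move=> r r0 rt j Ju; apply: ray_real Ju; lra.
  have mT := powR_ge0 (m T) q.
  have m0 : m 0 `^ q = Tex * ((2 - p) * lam1).
    rewrite HT /m u0 -norm_pow divfK; last by rewrite gt_eqF //; apply: mulr_gt0 => //; lra.
    by rewrite /q.
  move: g1 g2 g3; rewrite /G m0 mulr0 addr0 => g1 g2 g3.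
  have key : 0 <= (2 - p) * (lam1 * kk - eps * (b - t)).
    rewrite /T in g3 mT; nra.
  rewrite pmulr_rge0 in key; last lra.
  have : lam1 * kk <= eps * (b - t) / 2.
    by move: kk1; rewrite ler_pdivlMr ?mulr_gt0 // => h; nra.
  have : 0 < eps * (b - t) by apply: mulr_gt0; lra.
  lra.
split.
  by move=> t /andP[t0 tT]; exact: Hmain.
split => // v Hv.
rewrite -u0 (Hmain 0 (lexx 0) Tpos) -Hlam.
by apply: ereal_inf_lbound; exists v.
Qed.

End Main.


Theorem proposition6 (R : realType) (V : completeNormedModType R)
  (ip : V -> V -> R) (p : R) (J : V -> \bar R) (lam1 : R) (f : V) (u : R -> V) (Tex : R) :
  is_inner_product ip ->
  admissible_functional p J ->
  lambda1 ip p J = lam1%:E ->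
  0 < lam1 ->
  1 <= p < 2 ->
  H0 ip J f ->
  gradient_flow ip J f u ->
  extinction_time u Tex ->
  Tex = `|f| `^ (2 - p) / ((2 - p) * lam1) ->
  (exists (wstar : V) (tk : nat -> R),
      (forall k, 0 <= tk k < Tex) /\
      {homo tk : i j / (i <= j)%N >-> i <= j} /\
      tk @ \oo --> Tex /\
      (fun k => (scale_a p Tex (tk k))^-1 *: u (tk k)) @ \oo --> wstar) ->
  (forall t : R, 0 <= t < Tex -> rayleigh p J (u t) = lam1%:E) /\
  ground_state ip p J f.
Proof.
move=> ipP JA Hlam lam0 /andP[p1 p2] Hf Hflow Hext HT _.
exact: (@main_sec R V ip p J f u ipP JA p1 p2 Hf Hflow lam1 Tex Hlam lam0 Hext HT).
Qed.
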